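(* Let $\lambda_1>\lambda_2>\lambda_3>0$, $D=\mathrm{diag}(\lambda_1,\lambda_2,\lambda_3)$, and $G=\widetilde W_{1,0}(\cdot;D)\circ\mathbf P:S^3\to\mathbb R$. For $s>2$ write $a(s)=\sqrt{\tfrac12+\tfrac1s}$, $b(s)=\sqrt{\tfrac12-\tfrac1s}$. The critical points of $G$ are exactly the following (all sign combinations independent): 1. $(\pm1,0,0,0)$, with value $(\lambda_1-1)^2+(\lambda_2-1)^2+(\lambda_3-1)^2$; 2. $(0,\pm1,0,0)$, value $(\lambda_1-1)^2+(\lambda_2+1)^2+(\lambda_3+1)^2$; 3. $(0,0,\pm1,0)$, value $(\lambda_1+1)^2+(\lambda_2-1)^2+(\lambda_3+1)^2$; 4. $(0,0,0,\pm1)$, value $(\lambda_1+1)^2+(\lambda_2+1)^2+(\lambda_3-1)^2$; 5. if $s=\lambda_2-\lambda_3>2$: $(0,0,\pm a(s),\pm b(s))$, value $(\lambda_1+1)^2+\frac12(\lambda_2+\lambda_3)^2$; 6. if $s=\lambda_1-\lambda_3>2$: $(0,\pm a(s),0,\pm b(s))$, value $(\lambda_2+1)^2+\frac12(\lambda_1+\lambda_3)^2$; 7. if $s=\lambda_1-\lambda_2>2$: $(0,\pm a(s),\pm b(s),0)$, value $(\lambda_3+1)^2+\frac12(\lambda_1+\lambda_2)^2$; 8. if $s=\lambda_1+\lambda_2>2$: $(\pm a(s),0,0,\pm b(s))$, value $(\lambda_3-1)^2+\frac12(\lambda_1-\lambda_2)^2$; 9. if $s=\lambda_1+\lambda_3>2$: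 $(\pm a(s),0,\pm b(s),0)$, value $(\lambda_2-1)^2+\frac12(\lambda_1-\lambda_3)^2$; 10. if $s=\lambda_2+\lambda_3>2$: $(\pm a(s),\pm b(s),0,0)$, value $(\lambda_1-1)^2+\frac12(\lambda_2-\lambda_3)^2$.
   Context: $\mathrm{sym}(Y)=\tfrac12(Y+Y^T)$, $\|Y\|^2=\mathrm{tr}(Y^TY)$. For invertible $G$, $\widetilde W_{1,0}(R;G)=\|\mathrm{sym}(R^TG-\mathbb I_3)\|^2$, $R\in SO(3)$. $S^3=\{q=(q^0,q^1,q^2,q^3)\in\mathbb R^4:\|q\|=1\}$ and $\mathbf P:S^3\to SO(3)$ is the double covering $$\mathbf P(q)=\begin{pmatrix}(q^0)^2+(q^1)^2-(q^2)^2-(q^3)^2 & 2(q^1q^2-q^0q^3) & 2(q^1q^3+q^0q^2)\\ 2(q^1q^2+q^0q^3) & (q^0)^2-(q^1)^2+(q^2)^2-(q^3)^2 & 2(q^2q^3-q^0q^1)\\ 2(q^1q^3-q^0q^2) & 2(q^2q^3+q^0q^1) & (q^0)^2-(q^1)^2-(q^2)^2+(q^3)^2\end{pmatrix},$$ with $\mathbf P(q)=\mathbf P(-q)$. Critical points of $G$ are points where the differential of $G$ on the manifold $S^3$ vanishes. *)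

(* Defs.v *)
From Stdlib Require Import Reals Lra.
Open Scope R_scope.

(* 3x3 real matrices, indexed by 0,1,2 (entries at other indices are never used). *)
Definition mat3 := nat -> nat -> R.
Definition sum3 (f : nat -> R) : R := f 0%nat + f 1%nat + f 2%nat.
Definition mtr (A : mat3) : mat3 := fun i j => A j i.
Definition mmul (A B : mat3) : mat3 := fun i j => sum3 (fun k => A i k * B k j).
Definition id3 : mat3 := fun i j => if Nat.eqb i j then 1 else 0.
Definition msub (A B : mat3) : mat3 := fun i j => A i j - B i j.
Definition msym (A : mat3) : mat3 := fun i j => / 2 * (A i j + A j i).
Definition mtrace (A : mat3) : R := sum3 (fun i => A i i).
Definition fnorm2 (Y : mat3) : R := mtrace (mmul (mtr Y) Y).

Definition W10 (Rm Gm : mat3) : R := fnorm2 (msym (msub (mmul (mtr Rm) Gm) id3)).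

Definition diag3 (l1 l2 l3 : R) : mat3 :=
  fun i j => if Nat.eqb i j then
               match i with 0%nat => l1 | 1%nat => l2 | _ => l3 end
             else 0.

(* The double covering P : S^3 -> SO(3), written as a polynomial map on R^4. *)
Definition Pq (q0 q1 q2 q3 : R) : mat3 := fun i j =>
  match i, j with
  | 0%nat, 0%nat => q0^2 + q1^2 - q2^2 - q3^2
  | 0%nat, 1%nat => 2 * (q1*q2 - q0*q3)
  | 0%nat, _     => 2 * (q1*q3 + q0*q2)
  | 1%nat, 0%nat => 2 * (q1*q2 + q0*q3)
  | 1%nat, 1%nat => q0^2 - q1^2 + q2^2 - q3^2
  | 1%nat, _     => 2 * (q2*q3 - q0*q1)
  | _, 0%nat     => 2 * (q1*q3 - q0*q2)
  | _, 1%nat     => 2 * (q2*q3 + q0*q1)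
  | _, _         => q0^2 - q1^2 - q2^2 + q3^2
  end.

(* G = W~_{1,0}(. ; D) o P, with D = diag(l1,l2,l3); given by the same
   polynomial formula on all of R^4 (its restriction to S^3 is the paper's G). *)
Definition Gfun (l1 l2 l3 q0 q1 q2 q3 : R) : R :=
  W10 (Pq q0 q1 q2 q3) (diag3 l1 l2 l3).

Definition on_S3 (q0 q1 q2 q3 : R) : Prop := q0^2 + q1^2 + q2^2 + q3^2 = 1.

Definition critical_S3 (l1 l2 l3 q0 q1 q2 q3 : R) : Prop :=
  forall v0 v1 v2 v3 : R,
    q0*v0 + q1*v1 + q2*v2 + q3*v3 = 0 ->
    derivable_pt_lim
      (fun t => Gfun l1 l2 l3 (q0 + t*v0) (q1 + t*v1) (q2 + t*v2) (q3 + t*v3)) 0 0.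

Definition a_s (s : R) : R := sqrt (/2 + /s).
Definition b_s (s : R) : R := sqrt (/2 - /s).

Definition pm (x y : R) : Prop := x = y \/ x = - y.

(* Main.v *)
Require Import Defs.
From Stdlib Require Import Reals Lra FunctionalExtensionality.
From Coquelicot Require Import Coquelicot.
Open Scope R_scope.

Definition Fp (l1 l2 l3 W X Y Z : R) : R :=
 (l1^2+l2^2+l3^2)*(W+X+Y+Z)^2/2 + 3
 - 2*(l1*(W+X-Y-Z) + l2*(W-X+Y-Z) + l3*(W-X-Y+Z))
 + /2*(l1^2*(W+X-Y-Z)^2 + l2^2*(W-X+Y-Z)^2 + l3^2*(W-X-Y+Z)^2)
 + 4*l1*l2*(X*Y-W*Z) + 4*l1*l3*(X*Z-W*Y) + 4*l2*l3*(Y*Z-W*X).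

Definition FW (l1 l2 l3 W X Y Z : R) : R :=
 (l1^2+l2^2+l3^2)*(W+X+Y+Z) - 2*(l1+l2+l3)
 + l1^2*(W+X-Y-Z) + l2^2*(W-X+Y-Z) + l3^2*(W-X-Y+Z)
 - 4*l1*l2*Z - 4*l1*l3*Y - 4*l2*l3*X.
Definition FX (l1 l2 l3 W X Y Z : R) : R :=
 (l1^2+l2^2+l3^2)*(W+X+Y+Z) - 2*(l1-l2-l3)
 + l1^2*(W+X-Y-Z) - l2^2*(W-X+Y-Z) - l3^2*(W-X-Y+Z)
 + 4*l1*l2*Y + 4*l1*l3*Z - 4*l2*l3*W.
Definition FY (l1 l2 l3 W X Y Z : R) : R :=
 (l1^2+l2^2+l3^2)*(W+X+Y+Z) - 2*(-l1+l2-l3)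
 - l1^2*(W+X-Y-Z) + l2^2*(W-X+Y-Z) - l3^2*(W-X-Y+Z)
 + 4*l1*l2*X - 4*l1*l3*W + 4*l2*l3*Z.
Definition FZ (l1 l2 l3 W X Y Z : R) : R :=
 (l1^2+l2^2+l3^2)*(W+X+Y+Z) - 2*(-l1-l2+l3)
 - l1^2*(W+X-Y-Z) - l2^2*(W-X+Y-Z) + l3^2*(W-X-Y+Z)
 - 4*l1*l2*W + 4*l1*l3*X + 4*l2*l3*Y.

Lemma G_eq l1 l2 l3 q0 q1 q2 q3 :
  Gfun l1 l2 l3 q0 q1 q2 q3 = Fp l1 l2 l3 (q0^2) (q1^2) (q2^2) (q3^2).
Proof.
  unfold Gfun, W10, fnorm2, mtrace, mmul, mtr, msym, msub, id3, diag3, Pq, Fp.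
  unfold sum3; simpl.
  field.
Qed.

Lemma G_deriv l1 l2 l3 q0 q1 q2 q3 v0 v1 v2 v3 :
  derivable_pt_lim
    (fun t => Gfun l1 l2 l3 (q0 + t*v0) (q1 + t*v1) (q2 + t*v2) (q3 + t*v3)) 0
    (2*(q0*v0*FW l1 l2 l3 (q0^2) (q1^2) (q2^2) (q3^2)
      + q1*v1*FX l1 l2 l3 (q0^2) (q1^2) (q2^2) (q3^2)
      + q2*v2*FY l1 l2 l3 (q0^2) (q1^2) (q2^2) (q3^2)
      + q3*v3*FZ l1 l2 l3 (q0^2) (q1^2) (q2^2) (q3^2))).
Proof.
  replace (fun t => Gfun l1 l2 l3 (q0 + t*v0) (q1 + t*v1) (q2 + t*v2) (q3 + t*v3))
    with (fun t => Fp l1 l2 l3 ((q0 + t*v0)^2) ((q1 + t*v1)^2) ((q2 + t*v2)^2) ((q3 + t*v3)^2)).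
  2:{ apply functional_extensionality; intro t; symmetry; apply G_eq. }
  apply is_derive_Reals.
  unfold Fp, FW, FX, FY, FZ.
  auto_derive. { exact I. }
  field.
Qed.

Definition gW l1 l2 l3 q0 q1 q2 q3 := FW l1 l2 l3 (q0^2) (q1^2) (q2^2) (q3^2).
Definition gX l1 l2 l3 q0 q1 q2 q3 := FX l1 l2 l3 (q0^2) (q1^2) (q2^2) (q3^2).
Definition gY l1 l2 l3 q0 q1 q2 q3 := FY l1 l2 l3 (q0^2) (q1^2) (q2^2) (q3^2).
Definition gZ l1 l2 l3 q0 q1 q2 q3 := FZ l1 l2 l3 (q0^2) (q1^2) (q2^2) (q3^2).
Definition alq l1 l2 l3 q0 q1 q2 q3 :=
  l1*(q0^2+q1^2-q2^2-q3^2) + l2*(q0^2-q1^2+q2^2-q3^2) + l3*(q0^2-q1^2-q2^2+q3^2).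

Definition Lag l1 l2 l3 q0 q1 q2 q3 : Prop :=
  forall v0 v1 v2 v3 : R, q0*v0 + q1*v1 + q2*v2 + q3*v3 = 0 ->
   q0*v0*gW l1 l2 l3 q0 q1 q2 q3 + q1*v1*gX l1 l2 l3 q0 q1 q2 q3
   + q2*v2*gY l1 l2 l3 q0 q1 q2 q3 + q3*v3*gZ l1 l2 l3 q0 q1 q2 q3 = 0.

Lemma crit_iff l1 l2 l3 q0 q1 q2 q3 :
  critical_S3 l1 l2 l3 q0 q1 q2 q3 <-> Lag l1 l2 l3 q0 q1 q2 q3.
Proof.
  unfold critical_S3, Lag, gW, gX, gY, gZ; split.
  - intros Hc v0 v1 v2 v3 Hv.
    pose proof (Hc v0 v1 v2 v3 Hv) as D1.
    pose proof (G_deriv l1 l2 l3 q0 q1 q2 q3 v0 v1 v2 v3) as D2.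
    pose proof (uniqueness_limite _ _ _ _ D2 D1) as E. lra.
  - intros H v0 v1 v2 v3 Hv.
    pose proof (G_deriv l1 l2 l3 q0 q1 q2 q3 v0 v1 v2 v3) as D2.
    rewrite (H v0 v1 v2 v3 Hv) in D2. rewrite Rmult_0_r in D2. exact D2.
Qed.

Section Ids.
Variables l1 l2 l3 q0 q1 q2 q3 : R.
Hypothesis hq : on_S3 q0 q1 q2 q3.
Let g1 := gW l1 l2 l3 q0 q1 q2 q3.
Let g2 := gX l1 l2 l3 q0 q1 q2 q3.
Let g3 := gY l1 l2 l3 q0 q1 q2 q3.
Let g4 := gZ l1 l2 l3 q0 q1 q2 q3.
Let a := alq l1 l2 l3 q0 q1 q2 q3.

Ltac idt := unfold on_S3 in hq; unfold g1, g2, g3, g4, a, gW, gX, gY, gZ, alq, FW, FX, FY, FZ;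
  replace (q0^2) with (1 - q1^2 - q2^2 - q3^2) by lra; ring.

Lemma dWX : g1 - g2 = 2*(l2+l3)*(a - 2 - l1). Proof. idt. Qed.
Lemma dWY : g1 - g3 = 2*(l1+l3)*(a - 2 - l2). Proof. idt. Qed.
Lemma dWZ : g1 - g4 = 2*(l1+l2)*(a - 2 - l3). Proof. idt. Qed.
Lemma dXY : g2 - g3 = 2*(l1-l2)*(a - 2 + l3). Proof. idt. Qed.
Lemma dXZ : g2 - g4 = 2*(l1-l3)*(a - 2 + l2). Proof. idt. Qed.
Lemma dYZ : g3 - g4 = 2*(l2-l3)*(a - 2 + l1). Proof. idt. Qed.
End Ids.

Lemma nz_eq a b c : a*b*c = 0 -> a <> 0 -> b <> 0 -> c = 0.
Proof. intros H ha hb. destruct (Rmult_integral _ _ H) as [h|h]; [|exact h].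
  destruct (Rmult_integral _ _ h); contradiction. Qed.

Lemma fac_eq k z : 2*k*z = 0 -> k <> 0 -> z = 0.
Proof. intros H hk. destruct (Rmult_integral _ _ H) as [h|h].
  - destruct (Rmult_integral _ _ h); [lra|contradiction].
  - lra. Qed.

Lemma sq_pos x : x <> 0 -> 0 < x^2.
Proof. intros h. destruct (Rtotal_order x 0) as [h'|[h'|h']]; [nra|contradiction|nra]. Qed.

Lemma pm_sqrt x y : x^2 = y -> pm x (sqrt y).
Proof. intros h; subst y. unfold pm. destruct (Rle_or_lt 0 x).
  - left. rewrite sqrt_pow2; auto.
  - right. replace (x^2) with ((-x)^2) by ring. rewrite sqrt_pow2; lra. Qed.

Lemma pm_sq x y : 0 <= y -> pm x (sqrt y) -> x^2 = y.
Proof. intros hy [h|h]; subst x.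
  - simpl. rewrite Rmult_1_r. apply sqrt_sqrt; auto.
  - replace ((- sqrt y)^2) with (sqrt y * sqrt y) by ring. apply sqrt_sqrt; auto. Qed.

Lemma pm_one x : x^2 = 1 -> pm x 1.
Proof. intros h. unfold pm. assert ((x-1)*(x+1) = 0) by nra.
  destruct (Rmult_integral _ _ H); [left|right]; lra. Qed.

Lemma inv_bounds s : s > 2 -> 0 <= /2 + /s /\ 0 <= /2 - /s.
Proof. intros hs. assert (0 < /s) by (apply Rinv_0_lt_compat; lra).
  assert (/s < /2) by (apply Rinv_lt_contravar; lra). lra. Qed.

Lemma pair_fin s a b : s > 0 -> a^2 + b^2 = 1 -> s*(a^2 - b^2) = 2 -> b <> 0 ->
  s > 2 /\ pm a (a_s s) /\ pm b (b_s s).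
Proof.
  intros hs h1 h2 hb. pose proof (sq_pos b hb).
  assert (hs2 : s > 2) by nra.
  split; [exact hs2|]. unfold a_s, b_s. split; apply pm_sqrt.
  - apply (Rmult_eq_reg_l (2*s)); [|lra]. field_simplify; [|lra]. nra.
  - apply (Rmult_eq_reg_l (2*s)); [|lra]. field_simplify; [|lra]. nra.
Qed.

Lemma pair_sq s a b : s > 2 -> pm a (a_s s) -> pm b (b_s s) ->
  a^2 = /2 + /s /\ b^2 = /2 - /s.
Proof. intros hs ha hb. destruct (inv_bounds s hs). split; eapply pm_sq; eauto. Qed.

Lemma lag_suff l1 l2 l3 q0 q1 q2 q3 m :
  (q0 = 0 \/ gW l1 l2 l3 q0 q1 q2 q3 = m) ->
  (q1 = 0 \/ gX l1 l2 l3 q0 q1 q2 q3 = m) ->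
  (q2 = 0 \/ gY l1 l2 l3 q0 q1 q2 q3 = m) ->
  (q3 = 0 \/ gZ l1 l2 l3 q0 q1 q2 q3 = m) -> Lag l1 l2 l3 q0 q1 q2 q3.
Proof.
  intros h0 h1 h2 h3 v0 v1 v2 v3 Hv.
  assert (e0 : q0*v0*gW l1 l2 l3 q0 q1 q2 q3 = q0*v0*m)
    by (destruct h0 as [h|h]; rewrite h; ring).
  assert (e1 : q1*v1*gX l1 l2 l3 q0 q1 q2 q3 = q1*v1*m)
    by (destruct h1 as [h|h]; rewrite h; ring).
  assert (e2 : q2*v2*gY l1 l2 l3 q0 q1 q2 q3 = q2*v2*m)
    by (destruct h2 as [h|h]; rewrite h; ring).
  assert (e3 : q3*v3*gZ l1 l2 l3 q0 q1 q2 q3 = q3*v3*m)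
    by (destruct h3 as [h|h]; rewrite h; ring).
  rewrite e0, e1, e2, e3.
  replace (q0*v0*m + q1*v1*m + q2*v2*m + q3*v3*m) with (m*(q0*v0 + q1*v1 + q2*v2 + q3*v3)) by ring.
  rewrite Hv; ring.
Qed.

Lemma pm1_sq x : pm x 1 -> x^2 = 1.
Proof. intros [h|h]; subst; ring. Qed.

Ltac fin := repeat match goal with |- _ /\ _ => split end; auto.

Theorem mainTheorem7 (l1 l2 l3 : R) (h12 : l1 > l2) (h23 : l2 > l3) (h3 : l3 > 0)
  (q0 q1 q2 q3 : R) (hq : on_S3 q0 q1 q2 q3) :
  let G := Gfun l1 l2 l3 q0 q1 q2 q3 in
  let c1 := pm q0 1 /\ q1 = 0 /\ q2 = 0 /\ q3 = 0 in
  let c2 := q0 = 0 /\ pm q1 1 /\ q2 = 0 /\ q3 = 0 in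
  let c3 := q0 = 0 /\ q1 = 0 /\ pm q2 1 /\ q3 = 0 in
  let c4 := q0 = 0 /\ q1 = 0 /\ q2 = 0 /\ pm q3 1 in
  let c5 := l2 - l3 > 2 /\ q0 = 0 /\ q1 = 0
            /\ pm q2 (a_s (l2 - l3)) /\ pm q3 (b_s (l2 - l3)) in
  let c6 := l1 - l3 > 2 /\ q0 = 0 /\ pm q1 (a_s (l1 - l3))
            /\ q2 = 0 /\ pm q3 (b_s (l1 - l3)) in
  let c7 := l1 - l2 > 2 /\ q0 = 0 /\ pm q1 (a_s (l1 - l2))
            /\ pm q2 (b_s (l1 - l2)) /\ q3 = 0 in
  let c8 := l1 + l2 > 2 /\ pm q0 (a_s (l1 + l2)) /\ q1 = 0
            /\ q2 = 0 /\ pm q3 (b_s (l1 + l2)) in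
  let c9 := l1 + l3 > 2 /\ pm q0 (a_s (l1 + l3)) /\ q1 = 0
            /\ pm q2 (b_s (l1 + l3)) /\ q3 = 0 in
  let c10 := l2 + l3 > 2 /\ pm q0 (a_s (l2 + l3)) /\ pm q1 (b_s (l2 + l3))
             /\ q2 = 0 /\ q3 = 0 in
  (critical_S3 l1 l2 l3 q0 q1 q2 q3 <->
     c1 \/ c2 \/ c3 \/ c4 \/ c5 \/ c6 \/ c7 \/ c8 \/ c9 \/ c10)
  /\ (c1 -> G = (l1-1)^2 + (l2-1)^2 + (l3-1)^2)
  /\ (c2 -> G = (l1-1)^2 + (l2+1)^2 + (l3+1)^2)
  /\ (c3 -> G = (l1+1)^2 + (l2-1)^2 + (l3+1)^2)
  /\ (c4 -> G = (l1+1)^2 + (l2+1)^2 + (l3-1)^2)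
  /\ (c5 -> G = (l1+1)^2 + /2 * (l2+l3)^2)
  /\ (c6 -> G = (l2+1)^2 + /2 * (l1+l3)^2)
  /\ (c7 -> G = (l3+1)^2 + /2 * (l1+l2)^2)
  /\ (c8 -> G = (l3-1)^2 + /2 * (l1-l2)^2)
  /\ (c9 -> G = (l2-1)^2 + /2 * (l1-l3)^2)
  /\ (c10 -> G = (l1-1)^2 + /2 * (l2-l3)^2).
Proof.
  cbv zeta.
  pose proof (dWX l1 l2 l3 q0 q1 q2 q3 hq) as DWX.
  pose proof (dWY l1 l2 l3 q0 q1 q2 q3 hq) as DWY.
  pose proof (dWZ l1 l2 l3 q0 q1 q2 q3 hq) as DWZ.
  pose proof (dXY l1 l2 l3 q0 q1 q2 q3 hq) as DXY.
  pose proof (dXZ l1 l2 l3 q0 q1 q2 q3 hq) as DXZ.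
  pose proof (dYZ l1 l2 l3 q0 q1 q2 q3 hq) as DYZ.
  split.
  { rewrite crit_iff. split.
  - intro HL.
    assert (P01 : q0*q1*(gW l1 l2 l3 q0 q1 q2 q3 - gX l1 l2 l3 q0 q1 q2 q3) = 0)
      by (rewrite <- (HL q1 (-q0) 0 0 ltac:(ring)); ring).
    assert (P02 : q0*q2*(gW l1 l2 l3 q0 q1 q2 q3 - gY l1 l2 l3 q0 q1 q2 q3) = 0)
      by (rewrite <- (HL q2 0 (-q0) 0 ltac:(ring)); ring).
    assert (P03 : q0*q3*(gW l1 l2 l3 q0 q1 q2 q3 - gZ l1 l2 l3 q0 q1 q2 q3) = 0)
      by (rewrite <- (HL q3 0 0 (-q0) ltac:(ring)); ring).
    assert (P12 : q1*q2*(gX l1 l2 l3 q0 q1 q2 q3 - gY l1 l2 l3 q0 q1 q2 q3) = 0)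
      by (rewrite <- (HL 0 q2 (-q1) 0 ltac:(ring)); ring).
    assert (P13 : q1*q3*(gX l1 l2 l3 q0 q1 q2 q3 - gZ l1 l2 l3 q0 q1 q2 q3) = 0)
      by (rewrite <- (HL 0 q3 0 (-q1) ltac:(ring)); ring).
    assert (P23 : q2*q3*(gY l1 l2 l3 q0 q1 q2 q3 - gZ l1 l2 l3 q0 q1 q2 q3) = 0)
      by (rewrite <- (HL 0 0 q3 (-q2) ltac:(ring)); ring).
    assert (A01 : q0 <> 0 -> q1 <> 0 -> alq l1 l2 l3 q0 q1 q2 q3 = 2 + l1).
    { intros a b. pose proof (nz_eq _ _ _ P01 a b) as H. rewrite DWX in H.
      apply fac_eq in H; lra. }
    assert (A02 : q0 <> 0 -> q2 <> 0 -> alq l1 l2 l3 q0 q1 q2 q3 = 2 + l2).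
    { intros a b. pose proof (nz_eq _ _ _ P02 a b) as H. rewrite DWY in H.
      apply fac_eq in H; lra. }
    assert (A03 : q0 <> 0 -> q3 <> 0 -> alq l1 l2 l3 q0 q1 q2 q3 = 2 + l3).
    { intros a b. pose proof (nz_eq _ _ _ P03 a b) as H. rewrite DWZ in H.
      apply fac_eq in H; lra. }
    assert (A12 : q1 <> 0 -> q2 <> 0 -> alq l1 l2 l3 q0 q1 q2 q3 = 2 - l3).
    { intros a b. pose proof (nz_eq _ _ _ P12 a b) as H. rewrite DXY in H.
      apply fac_eq in H; lra. }
    assert (A13 : q1 <> 0 -> q3 <> 0 -> alq l1 l2 l3 q0 q1 q2 q3 = 2 - l2).
    { intros a b. pose proof (nz_eq _ _ _ P13 a b) as H. rewrite DXZ in H.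
      apply fac_eq in H; lra. }
    assert (A23 : q2 <> 0 -> q3 <> 0 -> alq l1 l2 l3 q0 q1 q2 q3 = 2 - l1).
    { intros a b. pose proof (nz_eq _ _ _ P23 a b) as H. rewrite DYZ in H.
      apply fac_eq in H; lra. }
    clear P01 P02 P03 P12 P13 P23 HL DWX DWY DWZ DXY DXZ DYZ.
    unfold on_S3 in hq.
    destruct (Req_dec q0 0) as [z0|n0]; destruct (Req_dec q1 0) as [z1|n1];
    destruct (Req_dec q2 0) as [z2|n2]; destruct (Req_dec q3 0) as [z3|n3].
    + exfalso. subst. lra.
    + do 3 right; left. subst. fin. apply pm_one. lra.
    + do 2 right; left. subst. fin. apply pm_one. lra.
    + do 4 right; left. pose proof (A23 n2 n3) as E. subst. unfold alq in E.
      destruct (pair_fin (l2-l3) q2 q3) as [hs [ha hb]]; try lra; auto.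
      replace (q2^2) with (1-q3^2) in * by lra. lra.
      fin.
    + right; left. subst. fin. apply pm_one. lra.
    + do 5 right; left. pose proof (A13 n1 n3) as E. subst. unfold alq in E.
      destruct (pair_fin (l1-l3) q1 q3) as [hs [ha hb]]; try lra; auto.
      replace (q1^2) with (1-q3^2) in * by lra. lra.
      fin.
    + do 6 right; left. pose proof (A12 n1 n2) as E. subst. unfold alq in E.
      destruct (pair_fin (l1-l2) q1 q2) as [hs [ha hb]]; try lra; auto.
      replace (q1^2) with (1-q2^2) in * by lra. lra.
      fin.
    + exfalso. pose proof (A12 n1 n2). pose proof (A13 n1 n3). lra.
    + left. subst. fin. apply pm_one. lra.
    + do 7 right; left. pose proof (A03 n0 n3) as E. subst. unfold alq in E.
      destruct (pair_fin (l1+l2) q0 q3) as [hs [ha hb]]; try lra; auto.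
      replace (q0^2) with (1-q3^2) in * by lra. lra.
      fin.
    + do 8 right; left. pose proof (A02 n0 n2) as E. subst. unfold alq in E.
      destruct (pair_fin (l1+l3) q0 q2) as [hs [ha hb]]; try lra; auto.
      replace (q0^2) with (1-q2^2) in * by lra. lra.
      fin.
    + exfalso. pose proof (A02 n0 n2). pose proof (A03 n0 n3). lra.
    + do 9 right. pose proof (A01 n0 n1) as E. subst. unfold alq in E.
      destruct (pair_fin (l2+l3) q0 q1) as [hs [ha hb]]; try lra; auto.
      replace (q0^2) with (1-q1^2) in * by lra. lra.
      fin.
    + exfalso. pose proof (A01 n0 n1). pose proof (A03 n0 n3). lra.
    + exfalso. pose proof (A01 n0 n1). pose proof (A02 n0 n2). lra.
    + exfalso. pose proof (A01 n0 n1). pose proof (A02 n0 n2). lra.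
  - intros [c|[c|[c|[c|[c|[c|[c|[c|[c|c]]]]]]]]].
    + destruct c as [_ [e1 [e2 e3]]].
      apply (lag_suff _ _ _ _ _ _ _ (gW l1 l2 l3 q0 q1 q2 q3)); auto.
    + destruct c as [e0 [_ [e2 e3]]].
      apply (lag_suff _ _ _ _ _ _ _ (gX l1 l2 l3 q0 q1 q2 q3)); auto.
    + destruct c as [e0 [e1 [_ e3]]].
      apply (lag_suff _ _ _ _ _ _ _ (gY l1 l2 l3 q0 q1 q2 q3)); auto.
    + destruct c as [e0 [e1 [e2 _]]].
      apply (lag_suff _ _ _ _ _ _ _ (gZ l1 l2 l3 q0 q1 q2 q3)); auto.
    + destruct c as [hs [e0 [e1 [ha hb]]]].
      destruct (pair_sq _ _ _ hs ha hb) as [sa sb].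
      assert (Ea : alq l1 l2 l3 q0 q1 q2 q3 = 2 - l1)
        by (unfold alq; subst; rewrite sa, sb; field; lra).
      rewrite Ea in DYZ.
      apply (lag_suff _ _ _ _ _ _ _ (gZ l1 l2 l3 q0 q1 q2 q3)); auto; right; lra.
    + destruct c as [hs [e0 [ha [e2 hb]]]].
      destruct (pair_sq _ _ _ hs ha hb) as [sa sb].
      assert (Ea : alq l1 l2 l3 q0 q1 q2 q3 = 2 - l2)
        by (unfold alq; subst; rewrite sa, sb; field; lra).
      rewrite Ea in DXZ.
      apply (lag_suff _ _ _ _ _ _ _ (gZ l1 l2 l3 q0 q1 q2 q3)); auto; right; lra.
    + destruct c as [hs [e0 [ha [hb e3]]]].
      destruct (pair_sq _ _ _ hs ha hb) as [sa sb].
      assert (Ea : alq l1 l2 l3 q0 q1 q2 q3 = 2 - l3)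
        by (unfold alq; subst; rewrite sa, sb; field; lra).
      rewrite Ea in DXY.
      apply (lag_suff _ _ _ _ _ _ _ (gY l1 l2 l3 q0 q1 q2 q3)); auto; right; lra.
    + destruct c as [hs [ha [e1 [e2 hb]]]].
      destruct (pair_sq _ _ _ hs ha hb) as [sa sb].
      assert (Ea : alq l1 l2 l3 q0 q1 q2 q3 = 2 + l3)
        by (unfold alq; subst; rewrite sa, sb; field; lra).
      rewrite Ea in DWZ.
      apply (lag_suff _ _ _ _ _ _ _ (gZ l1 l2 l3 q0 q1 q2 q3)); auto; right; lra.
    + destruct c as [hs [ha [e1 [hb e3]]]].
      destruct (pair_sq _ _ _ hs ha hb) as [sa sb].
      assert (Ea : alq l1 l2 l3 q0 q1 q2 q3 = 2 + l2)
        by (unfold alq; subst; rewrite sa, sb; field; lra).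
      rewrite Ea in DWY.
      apply (lag_suff _ _ _ _ _ _ _ (gY l1 l2 l3 q0 q1 q2 q3)); auto; right; lra.
    + destruct c as [hs [ha [hb [e2 e3]]]].
      destruct (pair_sq _ _ _ hs ha hb) as [sa sb].
      assert (Ea : alq l1 l2 l3 q0 q1 q2 q3 = 2 + l1)
        by (unfold alq; subst; rewrite sa, sb; field; lra).
      rewrite Ea in DWX.
      apply (lag_suff _ _ _ _ _ _ _ (gX l1 l2 l3 q0 q1 q2 q3)); auto; right; lra.
  }
  rewrite !G_eq.
  split; [intros [h [e1 [e2 e3]]]; subst; apply pm1_sq in h;
    unfold Fp; rewrite h; field |].
  split; [intros [e0 [h [e2 e3]]]; subst; apply pm1_sq in h;
    unfold Fp; rewrite h; field |].
  split; [intros [e0 [e1 [h e3]]]; subst; apply pm1_sq in h;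
    unfold Fp; rewrite h; field |].
  split; [intros [e0 [e1 [e2 h]]]; subst; apply pm1_sq in h;
    unfold Fp; rewrite h; field |].
  split; [intros [hs [e0 [e1 [ha hb]]]]; destruct (pair_sq _ _ _ hs ha hb) as [sa sb]; subst;
    unfold Fp; rewrite sa, sb; field; lra |].
  split; [intros [hs [e0 [ha [e2 hb]]]]; destruct (pair_sq _ _ _ hs ha hb) as [sa sb]; subst;
    unfold Fp; rewrite sa, sb; field; lra |].
  split; [intros [hs [e0 [ha [hb e3]]]]; destruct (pair_sq _ _ _ hs ha hb) as [sa sb]; subst;
    unfold Fp; rewrite sa, sb; field; lra |].
  split; [intros [hs [ha [e1 [e2 hb]]]]; destruct (pair_sq _ _ _ hs ha hb) as [sa sb]; subst;
    unfold Fp; rewrite sa, sb; field; lra |].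
  split; [intros [hs [ha [e1 [hb e3]]]]; destruct (pair_sq _ _ _ hs ha hb) as [sa sb]; subst;
    unfold Fp; rewrite sa, sb; field; lra |].
  intros [hs [ha [hb [e2 e3]]]]; destruct (pair_sq _ _ _ hs ha hb) as [sa sb]; subst;
    unfold Fp; rewrite sa, sb; field; lra.
Qed.
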